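(* Let $G$ be a finite abelian group with $|G|\ge4$, $\sigma$ an automorphism of $G$ of order two, and $S$ a symmetric subset of $G$ of size $d$. Let $X$ be one of the Cayley sum graph $C_\Sigma(G,S)$, the twisted Cayley graph $C(G,S)^\sigma$, or the twisted Cayley sum graph $C_\Sigma(G,S)^\sigma$, and suppose $X$ is undirected. Then the diameter of $X$ is at least $\frac{|S|}{4e}|G|^{1/|S|}-\frac12|S|$.
   Context: $C_\Sigma(G,S)$ has vertex set $G$ and an edge from $x$ to $x^{-1}s$ for each $s\in S$; $C(G,S)^\sigma$ has an edge from $x$ to $\sigma(xs)$; $C_\Sigma(G,S)^\sigma$ has an edge from $x$ to $\sigma(x^{-1}s)$. A graph is undirected if its adjacency matrix is symmetric. The diameter is the supremum over pairs of vertices of the length of a shortest path between them (infinite if the graph is disconnected). *)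

(* Defs.v *)
From HB Require Import structures.
From mathcomp Require Import all_boot all_order all_algebra all_fingroup.
From mathcomp Require Import all_classical all_reals all_analysis.
Set Implicit Arguments. Unset Strict Implicit. Unset Printing Implicit Defensive.
Import Order.TTheory GRing.Theory Num.Theory.

Inductive graph_kind := CayleySum | TwistedCayley | TwistedCayleySum.

Section Graphs.
Variables (gT : finGroupType) (sigma : {perm gT}) (S : {set gT}).

Definition nbr (k : graph_kind) (x s : gT) : gT :=
  match k with
  | CayleySum => (x^-1 * s)%g
  | TwistedCayley => sigma (x * s)%g
  | TwistedCayleySum => sigma (x^-1 * s)%g
  end.

(* adjacency matrix (with multiplicities): number of s in S giving an edge x -> y *)
Definition adj (k : graph_kind) (x y : gT) : nat :=
  #|[set s in S | nbr k x s == y]|.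

Definition undirected (k : graph_kind) : Prop :=
  forall x y, adj k x y = adj k y x.

Definition edge (k : graph_kind) : rel gT := fun x y => adj k x y != 0%N.

Fixpoint walk (k : graph_kind) (n : nat) (x y : gT) : bool :=
  match n with
  | 0 => x == y
  | n'.+1 => [exists z, edge k x z && walk k n' z y]
  end.

Local Open Scope ereal_scope.
(* shortest path length (+oo if no path) *)
Definition gdist {R : realType} (k : graph_kind) (x y : gT) : \bar R :=
  ereal_inf [set (n%:R)%:E | n in [set n : nat | walk k n x y]].

Definition diameter {R : realType} (k : graph_kind) : \bar R :=
  ereal_sup [set gdist k x y | x in [set: gT] & y in [set: gT]]%classic.
End Graphs.

(* Main.v *)
Require Import Defs.
From HB Require Import structures.
From mathcomp Require Import all_boot all_order all_algebra all_fingroup.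
From mathcomp Require Import all_classical all_reals all_analysis.
From mathcomp Require Import ring lra.
Import Order.TTheory GRing.Theory Num.Theory.
Set Implicit Arguments. Unset Strict Implicit. Unset Printing Implicit Defensive.
Definition prodl (gT : finGroupType) (l : seq gT) : gT :=
  foldr (fun a b => (a * b)%g) 1%g l.

Lemma prodl_cat (gT : finGroupType) (s t : seq gT) :
  prodl (s ++ t) = (prodl s * prodl t)%g.
Proof. by elim: s => [|a s IH] /=; rewrite ?mul1g // IH mulgA. Qed.

Lemma prodl_nseq1 (gT : finGroupType) n : prodl (nseq n (1%g : gT)) = 1%g.
Proof. by elim: n => [|n IH] //=; rewrite IH mulg1. Qed.

Lemma prodl_perm (gT : finGroupType) (C : forall x y : gT, commute x y)
  (s1 s2 : seq gT) : perm_eq s1 s2 -> prodl s1 = prodl s2.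
Proof.
elim: s1 s2 => [|a s IH] s2 P.
  by case: s2 P => // b s2; move/perm_size.
have aS : a \in s2 by rewrite -(perm_mem P) mem_head.
move: P; case/splitPr: aS => s2a s2b P.
have P' : perm_eq s (s2a ++ s2b).
  rewrite -(perm_cons a); apply: perm_trans P _.
  by rewrite -[a :: s2b]cat1s -[a :: (s2a ++ s2b)]cat1s perm_catCA.
rewrite prodl_cat /= (IH _ P') prodl_cat !mulgA; congr (_ * _)%g.
exact: C.
Qed.

Lemma comm_all (gT : finGroupType) : abelian [set: gT] -> forall x y : gT, commute x y.
Proof.
move=> H x y; have : y \in ('C([set: gT]))%g.
  by move: H; rewrite abelianE => /fintype.subsetP; apply; rewrite inE.
by move/centP => /(_ x (finset.in_setT x)) /esym.
Qed.

Lemma iter_morph (gT : finGroupType) (f : gT -> gT)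
  (Hm : forall a b, f (a * b)%g = (f a * f b)%g) n a b :
  iter n f (a * b)%g = (iter n f a * iter n f b)%g.
Proof. by elim: n => [|n IH] //=; rewrite IH Hm. Qed.

Lemma iter_one (gT : finGroupType) (f : gT -> gT) (H1 : f 1%g = 1%g) n :
  iter n f 1%g = 1%g.
Proof. by elim: n => [|n IH] //=; rewrite IH H1. Qed.

Lemma iter_S (gT : finGroupType) (S : {set gT}) (f : gT -> gT)
  (HS : forall s, s \in S -> f s \in S) n s : s \in S -> iter n f s \in S.
Proof. by move=> sS; elim: n => [|n IH] //=; apply: HS. Qed.

Lemma walk_dec (gT : finGroupType) (sigma : {perm gT}) (S : {set gT}) k
  (psi phi : gT -> gT)
  (Hm : forall a b, psi (a * b)%g = (psi a * psi b)%g)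
  (HS : forall s, s \in S -> psi s \in S)
  (HphiS : forall s, s \in S -> phi s \in S)
  (Hn : forall x s, nbr sigma k x s = (psi x * phi s)%g) n :
  forall x y, walk sigma S k n x y ->
  exists l : seq gT, [/\ all (mem S) l, size l = n & y = (iter n psi x * prodl l)%g].
Proof.
elim: n => [|n IH] x y /=.
  by move/eqP->; exists [::]; rewrite /= mulg1.
case/existsP=> z /andP[Ez /IH [l [lS sl ->]]].
move: Ez; rewrite /edge /adj cards_eq0 => /set0Pn [s].
rewrite inE => /andP[sS /eqP <-].
exists (iter n psi (phi s) :: l); split => //=.
- by rewrite lS andbT; apply/iter_S/HphiS.
- by rewrite sl.
rewrite Hn iter_morph // -iterSr mulgA //.
Qed.

Lemma cover_card (gT : finGroupType) (S : {set gT})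
  (C : forall x y : gT, commute x y) D :
  (forall y : gT, exists l : seq gT, [/\ all (mem S) l, (size l <= D)%N & y = prodl l]) ->
  (#|gT| <= 'C(D + #|S|, D))%N.
Proof.
move=> Hy.
set d := #|S|.
pose T := [set t : D.-tuple 'I_d.+1 | sorted leq (map val t)].
pose e (i : 'I_d.+1) : gT := nth 1%g (enum S) i.
pose F (t : D.-tuple 'I_d.+1) := prodl (map e t).
rewrite -card_sorted_tuples -/T -cardsT.
apply: (leq_trans _ (leq_imset_card F T)).
apply: subset_leq_card; apply/fintype.subsetP => y _.
have [l [lS sl ->]] := Hy y.
pose u : seq 'I_d.+1 :=
  map (fun s => inord (index s (enum S))) l ++ nseq (D - size l) ord_max.
have su : size u = D by rewrite size_cat size_map size_nseq subnKC.
pose v := sort (relpre val leq) u.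
have sv : size v == D by rewrite size_sort su.
apply/imsetP; exists (Tuple sv).
  rewrite inE /= /v -sort_map; apply: sort_sorted; exact: leq_total.
rewrite /F /= (prodl_perm C (perm_map e (permEl (perm_sort _ _)))).
rewrite map_cat prodl_cat -map_comp map_id_in; last first.
  move=> s sl'; rewrite /e /= inordK; first by rewrite nth_index // mem_enum; move/allP: lS => /(_ s sl').
  rewrite ltnS /d cardE; apply: ltnW; rewrite index_mem mem_enum; by move/allP: lS => /(_ s sl').
have -> : map e (nseq (D - size l) ord_max) = nseq (D - size l) 1%g.
  by rewrite map_nseq /e nth_default // /= -cardE.
by rewrite prodl_nseq1 mulg1.
Qed.

Lemma ffact_le_exp n m : (n ^_ m <= n ^ m)%N.
Proof.
elim: m => [|m IH]; first by rewrite ffactn0 expn0.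
by rewrite ffactnSr expnSr leq_mul // leq_subr.
Qed.

Section RealBound.
Local Open Scope ring_scope.
Lemma real_bound (R : realType) (N D d : nat) :
  (N <= 'C(D + d, D))%N ->
  ((d%:R / (4 * expR 1)) * powR (N%:R) (d%:R^-1) - d%:R / 2 <= D%:R :> R).
Proof.
case: d => [|n] HN.
  by rewrite !mul0r subr0 ler0n.
set d := n.+1.
have hC : (N * d`! <= (D + d) ^ d)%N.
  apply: (leq_trans (leq_mul HN (leqnn _))).
  rewrite -[X in 'C(_, X)](addnK d D) bin_sub ?leq_addl // bin_ffact.
  exact: ffact_le_exp.
set x : R := d%:R; set y : R := (D + d)%:R; set f : R := d`!%:R.
have x0 : 0 < x by rewrite ltr0n.
have f0 : 0 < f by rewrite ltr0n fact_gt0.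
have y0 : 0 <= y by rewrite ler0n.
have e0 : 0 < expR 1 :> R by apply: expR_gt0.
have h1 : N%:R <= y ^+ d / f.
  by rewrite ler_pdivlMr // /y /f -natrX -natrM ler_nat.
have h2 : x ^+ d / f <= expR 1 ^+ d.
  rewrite -expRM_natl mulr1; apply: le_trans (expR_ge1Dxn n (ltW x0)).
  by rewrite lerDr ler01.
set b := y / x * expR 1.
have b0 : 0 <= b by rewrite /b mulr_ge0 // ?divr_ge0 // ltW.
have h3 : N%:R <= b ^+ d.
  apply: (le_trans h1).
  have -> : y ^+ d / f = (y / x) ^+ d * (x ^+ d / f).
    rewrite expr_div_n; field; apply/andP; split; rewrite gt_eqF //.
    by rewrite exprn_gt0.
  rewrite /b [X in _ <= X]exprMn; apply: ler_wpM2l; last exact: h2.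
  by rewrite exprn_ge0 // divr_ge0 // ltW.
have h4 : powR (N%:R) (x^-1) <= b.
  have -> : b = powR (b ^+ d) (x^-1).
    by rewrite -powR_mulrn // -powRrM mulfV ?powRr1 // gt_eqF.
  apply: ge0_ler_powR => //; first by rewrite invr_ge0 ltW.
    by rewrite nnegrE ler0n.
  by rewrite nnegrE exprn_ge0.
have h5 : x / (4 * expR 1) * b = y / 4.
  by rewrite /b; field; apply/andP; split; rewrite gt_eqF.
have hy : y = D%:R + x by rewrite /y natrD.
have h6 : x / (4 * expR 1) * powR (N%:R) (x^-1) <= x / (4 * expR 1) * b.
  by rewrite ler_pM2l // divr_gt0 // mulr_gt0 // ltr0n.
rewrite h5 hy in h6.
have D0 : 0 <= D%:R :> R by rewrite ler0n.
lra.
Qed.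
End RealBound.

Lemma adj_witness (gT : finGroupType) (sigma : {perm gT}) (S : {set gT}) k x y :
  adj sigma S k x y != 0%N -> exists2 t, t \in S & nbr sigma k x t = y.
Proof.
rewrite /adj cards_eq0 => /set0Pn [t]; rewrite inE => /andP[tS /eqP <-].
by exists t.
Qed.

Lemma witness_adj (gT : finGroupType) (sigma : {perm gT}) (S : {set gT}) k x t :
  t \in S -> adj sigma S k x (nbr sigma k x t) != 0%N.
Proof.
move=> tS; rewrite /adj cards_eq0; apply/set0Pn; exists t.
by rewrite inE tS eqxx.
Qed.

Lemma main_generic (R : realType) (gT : finGroupType) (sigma : {perm gT})
  (S : {set gT}) k (psi phi : gT -> gT)
  (C : forall x y : gT, commute x y)
  (Hm : forall a b, psi (a * b)%g = (psi a * psi b)%g)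
  (H1 : psi 1%g = 1%g)
  (HS : forall s, s \in S -> psi s \in S)
  (HphiS : forall s, s \in S -> phi s \in S)
  (Hn : forall x s, nbr sigma k x s = (psi x * phi s)%g) :
  (((#|S|%:R / (4 * expR 1)) * powR (#|gT|%:R) (#|S|%:R^-1) - #|S|%:R / 2)%:E
     <= @diameter gT sigma S R k)%E.
Proof.
have ub : forall y, (@gdist gT sigma S R k 1%g y <= @diameter gT sigma S R k)%E.
  move=> y; apply: ereal_sup_ubound; exists 1%g => //; exists y => //.
case: (pselect (forall y, exists n, walk sigma S k n 1%g y)) => [H|H]; last first.
  have [y Hy] := (existsNP _).2 H.
  apply: le_trans (leey _) _; apply: le_trans (ub y).
  rewrite /gdist.
  rewrite (_ : [set _ | n in _]%classic = set0%classic) ?ereal_inf0 //.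
  apply/seteqP; split => z //= [n Hw _]; exfalso; apply: Hy; exists n; exact: Hw.
pose m y := ex_minn (H y).
have gt0 : (0 < #|gT|)%N by apply/card_gt0P; exists 1%g.
have [y0 Hy0] := @bigop.eq_bigmax gT m gt0.
set D := (\max_(y : gT) m y)%N in Hy0.
have cov : forall y, exists l, [/\ all (mem S) l, (size l <= D)%N & y = prodl l].
  move=> y; have Hw : walk sigma S k (m y) 1%g y by rewrite /m; case: ex_minnP.
  have [l [lS sl ->]] := walk_dec Hm HS HphiS Hn Hw.
  exists l; split => //; first by rewrite sl (bigop.leq_bigmax y).
  by rewrite iter_one // mul1g.
have hN := cover_card C cov.
apply: (@le_trans _ _ ((D%:R)%:E)).
  by rewrite lee_fin; apply: real_bound.
apply: le_trans (ub y0).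
apply/ereal_infP => z [n Hw <-].
rewrite lee_fin ler_nat Hy0 /m; case: ex_minnP => m' _ Hmin; exact: Hmin.
Qed.

Unset Implicit Arguments.

Theorem theorem9p1 (R : realType) (gT : finGroupType) (sigma : {perm gT})
  (S : {set gT}) (d : nat) (k : graph_kind) :
  abelian [set: gT] ->
  (4 <= #|gT|)%N ->
  sigma \in Aut [set: gT] -> #[sigma]%g = 2%N ->
  (forall s, s \in S -> (s^-1)%g \in S) ->
  #|S| = d ->
  undirected sigma S k ->
  (((d%:R / (4 * expR 1)) * powR (#|gT|%:R) (d%:R^-1) - d%:R / 2)%:E
     <= @diameter gT sigma S R k)%E.
Proof.
move=> ab _ sAut _ Ssym <- und.
have C := comm_all ab.
have sM : forall a b, sigma (a * b)%g = (sigma a * sigma b)%g.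
  by move=> a b; move/morphicP: (Aut_morphic sAut); apply; rewrite !finset.inE.
have s1 : sigma 1%g = 1%g.
  by apply: (mulgI (sigma 1%g)); rewrite -sM !mulg1.
have invM : forall a b : gT, ((a * b)^-1 = a^-1 * b^-1)%g.
  by move=> a b; rewrite invMg; apply: C.
case: k und => und.
- apply: (@main_generic R gT sigma S CayleySum invg id) => //.
  all: try (by move=> x s; rewrite /nbr).
  all: try exact: invg1.
  all: try exact: invM.
- have sS : forall s, s \in S -> sigma s \in S.
    move=> s sS.
    have := @witness_adj gT sigma S TwistedCayley 1%g s sS.
    rewrite /= mul1g und => /adj_witness [t tS].
    rewrite /= -s1 => /perm_inj h.
    have -> : sigma s = t^-1%g by rewrite -[sigma s]mulg1 -(mulgV t) mulgA h mul1g.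
    exact: Ssym.
  apply: (@main_generic R gT sigma S TwistedCayley sigma sigma) => //.
- have sS : forall s, s \in S -> sigma s \in S.
    move=> s sS.
    have := @witness_adj gT sigma S TwistedCayleySum 1%g s sS.
    rewrite /= invg1 mul1g und => /adj_witness [t tS].
    rewrite /= -s1 => /perm_inj h.
    have -> : sigma s = t by rewrite -(mulKVg (sigma s) t) h mulg1.
    exact: tS.
  apply: (@main_generic R gT sigma S TwistedCayleySum (fun x => sigma (x^-1)%g) sigma) => //.
  + by move=> a b; rewrite invM sM.
  + by rewrite invg1.
  + by move=> s sS'; apply/sS/Ssym.
  + by move=> x s; rewrite /nbr sM.
Qed.
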